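(* Let $f:\mathbb{R}^n\to\mathbb{R}$ be convex and $\beta$-smooth, let $x^k\in\mathbb{R}^n$, and let $\hat f^k:\mathbb{R}^n\to\mathbb{R}$ satisfy: (a) $\hat f^k$ is convex; (b) $\hat f^k(x)\ge f(x^k)+\langle\nabla f(x^k),x-x^k\rangle$ for all $x$; (c) $\hat f^k(x)\le f(x)$ for all $x$. Then for all $x\in\mathbb{R}^n$, $$f(x)\le \hat f^k(x)+\tfrac{\beta}{2}\|x-x^k\|^2,$$ and $$\|\hat g-\nabla f(x)\|\le\beta\|x-x^k\|\quad\text{for all }\hat g\in\partial\hat f^k(x).$$
   Context: $f$ is $\beta$-smooth means differentiable with $\|\nabla f(x)-\nabla f(y)\|\le\beta\|x-y\|$ for all $x,y$. $\|\cdot\|$ is the Euclidean norm. *)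

(* Defs.v *)
(* R^n is modelled as row vectors 'rV[R]_n over R : realType. *)
From HB Require Import structures.
From mathcomp Require Import all_boot all_order all_algebra.
From mathcomp Require Import all_classical all_reals all_analysis.
Set Implicit Arguments. Unset Strict Implicit. Unset Printing Implicit Defensive.
Import Order.TTheory GRing.Theory Num.Theory.
Import numFieldNormedType.Exports.
Local Open Scope ring_scope.

Definition dotv {R : realType} {n : nat} (u v : 'rV[R]_n) : R :=
  \sum_(i < n) u ord0 i * v ord0 i.

(* Euclidean norm ||v|| = sqrt <v, v> (the library norm on matrices is the sup norm) *)
Definition enorm {R : realType} {n : nat} (v : 'rV[R]_n) : R :=
  Num.sqrt (dotv v v).

Definition is_gradient {R : realType} {n : nat}
    (f : 'rV[R]_n -> R) (g : 'rV[R]_n -> 'rV[R]_n) : Prop :=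
  forall x, differentiable f x /\ forall h, 'd f x h = dotv (g x) h.

Definition convex_fun {R : realType} {n : nat} (f : 'rV[R]_n -> R) : Prop :=
  forall (x y : 'rV[R]_n) (t : R), 0 <= t -> t <= 1 ->
    f (t *: x + (1 - t) *: y) <= t * f x + (1 - t) * f y.

Definition smooth_with {R : realType} {n : nat} (beta : R)
    (f : 'rV[R]_n -> R) (g : 'rV[R]_n -> 'rV[R]_n) : Prop :=
  is_gradient f g /\ forall x y, enorm (g x - g y) <= beta * enorm (x - y).

Definition subgrad {R : realType} {n : nat} (h : 'rV[R]_n -> R)
    (x gh : 'rV[R]_n) : Prop :=
  forall y, h x + dotv gh (y - x) <= h y.

(* Main.v *)
Require Import Defs.
From HB Require Import structures.
From mathcomp Require Import all_boot all_order all_algebra.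
From mathcomp Require Import all_classical all_reals all_analysis.
From mathcomp Require Import ring lra.
Import Order.TTheory GRing.Theory Num.Theory.
Import numFieldNormedType.Exports.
Local Open Scope ring_scope.

Section S.
Variables (R : realType) (n : nat).
Implicit Types (u v w : 'rV[R]_n).

Lemma dotvC u v : dotv u v = dotv v u.
Proof. by apply: eq_bigr => i _; rewrite mulrC. Qed.
Lemma dotvDl u v w : dotv (u + v) w = dotv u w + dotv v w.
Proof. by rewrite /dotv -big_split; apply: eq_bigr => i _; rewrite !mxE mulrDl. Qed.
Lemma dotvZl (a : R) u v : dotv (a *: u) v = a * dotv u v.
Proof. by rewrite /dotv mulr_sumr; apply: eq_bigr => i _; rewrite !mxE mulrA. Qed.
Lemma dotvNl u v : dotv (- u) v = - dotv u v.
Proof. by rewrite -scaleN1r dotvZl mulN1r. Qed.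
Lemma dotvBl u v w : dotv (u - v) w = dotv u w - dotv v w.
Proof. by rewrite dotvDl dotvNl. Qed.
Lemma dotvDr u v w : dotv w (u + v) = dotv w u + dotv w v.
Proof. by rewrite !(dotvC w) dotvDl. Qed.
Lemma dotvZr (a : R) u v : dotv v (a *: u) = a * dotv v u.
Proof. by rewrite !(dotvC v) dotvZl. Qed.
Lemma dotvBr u v w : dotv w (u - v) = dotv w u - dotv w v.
Proof. by rewrite !(dotvC w) dotvBl. Qed.
Lemma dotv_ge0 v : 0 <= dotv v v.
Proof. by apply: sumr_ge0 => i _; rewrite -expr2 sqr_ge0. Qed.
Lemma dotv_eq0 v : dotv v v = 0 -> v = 0.
Proof.
move=> /eqP; rewrite psumr_eq0 => [/allP H|i _]; last by rewrite -expr2 sqr_ge0.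
apply/rowP => i; rewrite mxE; have := H i (mem_index_enum i).
by rewrite /= mulf_eq0 orbb => /eqP.
Qed.
Lemma enorm_ge0 v : 0 <= enorm v.
Proof. exact: sqrtr_ge0. Qed.
Lemma enorm_sq v : enorm v ^+ 2 = dotv v v.
Proof. by rewrite sqr_sqrtr // dotv_ge0. Qed.
Lemma dotv0l v : dotv 0 v = 0.
Proof. by rewrite /dotv big1 // => i _; rewrite mxE mul0r. Qed.

Lemma cauchy_schwarz u v : dotv u v <= enorm u * enorm v.
Proof.
set a := enorm u; set b := enorm v.
have Ha := enorm_ge0 u; have Hb := enorm_ge0 v.
have [a0|ap] := eqVneq a 0.
  have : dotv u u = 0 by rewrite -enorm_sq -/a a0 expr0n.
  by move/dotv_eq0 => ->; rewrite dotv0l mulr_ge0.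
have [b0|bp] := eqVneq b 0.
  have : dotv v v = 0 by rewrite -enorm_sq -/b b0 expr0n.
  by move/dotv_eq0 => ->; rewrite dotvC dotv0l mulr_ge0.
have H := dotv_ge0 (b *: u - a *: v).
rewrite !(dotvBl, dotvBr, dotvZl, dotvZr) -!enorm_sq -/a -/b (dotvC v u) in H.
have abp : 0 < a * b by rewrite mulr_gt0 // lt_def ?ap ?bp.
rewrite -(ler_pM2l abp); nra.
Qed.
Lemma line_derive (f : 'rV[R]_n -> R) g (x d : 'rV[R]_n) (c : R) : is_gradient f g ->
  is_derive c 1 (fun t : R => f (x + t *: d)) (dotv (g (x + c *: d)) d).
Proof.
move=> Hg.
pose h := fun t : R => x + t *: d.
have hd : forall t, is_diff t h (fun s : R => s *: d).
  move=> t; rewrite /h.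
  have -> : (fun s : R => s *: d) = 0 + (fun s : R => s *: d) by rewrite add0r.
  apply: is_diffD.
have dh : differentiable h c by [].
have [df dfe] := Hg (h c).
have dc : differentiable (f \o h) c by exact: differentiable_comp.
have : is_derive c 1 (f \o h) ('D_1 (f \o h) c) by apply: derivableP; apply/derivable1_diffP.
rewrite deriveE // diff_comp // /= diff_val scale1r dfe.
done.
Qed.
Lemma descent (f : 'rV[R]_n -> R) g beta (x y : 'rV[R]_n) : smooth_with beta f g ->
  f y <= f x + dotv (g x) (y - x) + beta / 2 * dotv (y - x) (y - x).
Proof.
move=> [Hg Hl].
set d := y - x; set a := dotv (g x) d; set b := beta / 2 * dotv d d.
pose psi := fun t : R => f (x + t *: d).
pose phi := fun t : R => psi t - a * t - b * (t * t).
have D (c : R) : is_derive c 1 phi (dotv (g (x + c *: d)) d - a - b * (c + c)).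
  have H1 := @line_derive f g x d c Hg.
  have H2' : is_derive c (1:R) (a \*: (@id R)) (a *: (1:R)) by exact: is_deriveZ.
  have H2 : is_derive c (1:R) (fun t : R => a * t) (a *: (1:R)) := H2'.
  have H3' : is_derive c (1:R) (b \*: ((@id R) \* (@id R)))
     (b *: (c *: (1:R) + c *: (1:R))) by exact: is_deriveZ.
  have H3 : is_derive c (1:R) (fun t : R => b * (t * t)) (b *: (c *: (1:R) + c *: (1:R))) := H3'.
  have := is_deriveB (is_deriveB H1 H2) H3.
  by rewrite /GRing.scale /= !mulr1.
have [c c01 E] := MVT_segment ler01 (fun t _ => D t)
  (derivable_within_continuous (i := `[0, 1]%R) (fun t _ => @ex_derive _ _ _ _ _ _ _ (D t))).
have [c0 c1] : 0 <= c /\ c <= 1 by move: c01; rewrite in_itv /= => /andP.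
have Hc : dotv (g (x + c *: d)) d - a - b * (c + c) <= 0.
  rewrite /a -dotvBl.
  have H1 := cauchy_schwarz (g (x + c *: d) - g x) d.
  have H2 := Hl (x + c *: d) x.
  have Hn : enorm (x + c *: d - x) = c * enorm d.
    rewrite addrC addKr /enorm dotvZl dotvZr mulrA -expr2 sqrtrM ?sqr_ge0 //.
    by rewrite sqrtr_sqr ger0_norm.
  rewrite Hn in H2.
  have H3 : enorm (g (x + c *: d) - g x) * enorm d <= beta * (c * enorm d) * enorm d.
    by rewrite ler_wpM2r // enorm_ge0.
  have H4 : enorm d * enorm d = dotv d d by rewrite -expr2 enorm_sq.
  rewrite /b; rewrite -H4.
  nra.
have : phi 1 - phi 0 <= 0 by rewrite E subr0 mulr1.
rewrite /phi /psi scale1r scale0r addr0.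
have -> : x + d = y by rewrite /d addrC subrK.
rewrite !mulr1 !mulr0 !subr0.
lra.
Qed.
End S.

Theorem lemma3 (R : realType) (n : nat) (beta : R)
  (f : 'rV[R]_n -> R) (gradf : 'rV[R]_n -> 'rV[R]_n)
  (xk : 'rV[R]_n) (fk : 'rV[R]_n -> R) :
  convex_fun f -> smooth_with beta f gradf ->
  convex_fun fk ->
  (forall x, f xk + dotv (gradf xk) (x - xk) <= fk x) ->
  (forall x, fk x <= f x) ->
  (forall x, f x <= fk x + beta / 2 * enorm (x - xk) ^+ 2) /\
  (forall x gh, subgrad fk x gh ->
     enorm (gh - gradf x) <= beta * enorm (x - xk)).
Proof.
move=> _ Hs _ Hb Hu.
have P1 : forall x, f x <= fk x + beta / 2 * enorm (x - xk) ^+ 2.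
  move=> x; rewrite enorm_sq.
  have := @descent _ _ f gradf beta xk x Hs; have := Hb x; lra.
split => // x gh Hsub.
set v := gh - gradf x; set r := enorm (x - xk); set A := enorm v.
have br : 0 <= beta * r.
  by case: Hs => _ Hl; exact: le_trans (@enorm_ge0 _ _ _) (Hl x xk).
have K : forall s : R, s * (A * A) <= beta / 2 * (r * r) + beta / 2 * (s * s) * (A * A).
  move=> s.
  have e1 := Hsub (x + s *: v).
  have e2 := Hu (x + s *: v).
  have e3 := @descent _ _ f gradf beta x (x + s *: v) Hs.
  have e4 := P1 x.
  have Hd : x + s *: v - x = s *: v by rewrite addrC addKr.
  rewrite Hd in e1 e3.
  rewrite !(dotvZl, dotvZr) in e1 e3.
  have HA : A * A = dotv v v by rewrite -expr2 enorm_sq.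
  have Hr : r * r = enorm (x - xk) ^+ 2 by rewrite expr2.
  have Hv : dotv v v = dotv gh v - dotv (gradf x) v by rewrite /v dotvBl.
  rewrite HA Hr.
  have Hs' : s * dotv v v = s * dotv gh v - s * dotv (gradf x) v by rewrite Hv mulrBr.
  rewrite mulrA in e3.
  set Q := dotv v v in Hs' e3 *; set G := s * dotv gh v in Hs' e1 *.
  set F := s * dotv (gradf x) v in Hs' e3 *.
  set W := beta / 2 * (s * s) * Q in e3 *.
  set Z := beta / 2 * enorm (x - xk) ^+ 2 in e4 *.
  have EW : beta / 2 * s * (s * Q) = W by rewrite /W !mulrA.
  rewrite EW in e3.
  rewrite Hs'; lra.
have A0 := @enorm_ge0 _ _ v; rewrite -/A in A0.
have r0 : 0 <= r := @enorm_ge0 _ _ _.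
have [Az|Ap] := eqVneq A 0; first by rewrite Az.
have Ap' : 0 < A by rewrite lt_def Ap.
have [rz|rp] := eqVneq r 0.
  exfalso.
  pose s := 1 / (1 + `|beta|).
  have sp : 0 < s by rewrite divr_gt0 // ltr_pwDl // normr_ge0.
  have sb : s * `|beta| < 1.
    rewrite /s mul1r ltr_pdivrMl ?ltr_pwDl ?normr_ge0 //. lra.
  have := K s; rewrite rz mulr0 mulr0 add0r => Ks.
  have bb : beta <= `|beta| := ler_norm beta.
  have AA : 0 < A * A by rewrite mulr_gt0.
  have sAA : 0 < s * (A * A) by rewrite mulr_gt0.
  have bs : beta * s < 1.
    have := ltW sp; nra.
  have EE : beta / 2 * (s * s) * (A * A) = (beta * s) / 2 * (s * (A * A)) by rewrite !mulrA; ring.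
  rewrite EE in Ks.
  set P := s * (A * A) in Ks sAA; set t := beta * s in bs Ks.
  nra.
have rp' : 0 < r by rewrite lt_def rp.
have H := K (r / A).
have E1 : r / A * (A * A) = r * A by field; rewrite lt0r_neq0.
have E2 : beta / 2 * (r / A * (r / A)) * (A * A) = beta / 2 * (r * r) by field; rewrite lt0r_neq0.
rewrite E1 E2 in H.
rewrite -(ler_pM2l rp'); nra.
Qed.
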